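(* Let $T=ABCD$ be a nondegenerate tetrahedron in $\mathbb{R}^3$ (vertices not coplanar) and let $AB$ be one of its edges. If $\mathbf{v}_{AB}(T)=\mathbf{0}$, then $T$ is achiral.
   Context: A tetrahedron (an ordered or unordered set of four points) in $\mathbb{R}^3$ is achiral if it can be mapped onto its mirror image by an orientation-preserving isometry of $\mathbb{R}^3$ (equivalently, it is congruent to its mirror image via a proper rigid motion); otherwise it is chiral. Edge vector $\mathbf{v}_{AB}$: Given the edge $AB$ of $T=ABCD$, label the four vertices as $L,R,K,F$ with $\{L,R\}=\{A,B\}$ and $\{K,F\}=\{C,D\}$ such that $(\vec{LK}\times\vec{LF})\cdot\vec{LR}\ge 0$ (there are two such labellings, obtained from each other by swapping $L\leftrightarrow R$ together with $K\leftrightarrow F$; both give the same $\mathbf{v}_{AB}$ below). Rotate the faces $LRK$ and $LRF$ about the line $LR$ into a common plane with $K$ and $F$ on the same side of $LR$. In this plane use the Cartesian coordinates whose $x$-axis is the line $LR$ directed from $L$ to $R$ and whose $y$-axis is the perpendicular bisector $m$ of segment $LR$, with $y\ge 0$ on the side containing $K,F$. Thus $x_K$ is the signed distance from $K$ to $m$ (negative if $K$ is closer to $L$ than to $R$), i.e. $x_K=\frac{\vec{LK}\cdot\vec{LR}}{|LR|}-\frac{|LR|}{2}$, and $y_K=\frac{|\vec{LK}\times\vec{LR}|}{|LR|}\ge 0$ is the distance from $K$ to the line $LR$; similarly for $(x_F,y_F)$. Let $\alpha\in[0,\pi]$ be the dihedral angle between the planes $ABC$ and $ABD$ of $T$. Define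 $$\mathbf{v}_{AB}\coloneqq \sin(\alpha)\,\big(x_F-x_K,\ (y_F-y_K)(x_F+x_K)\big)\in\mathbb{R}^2.$$ *)

(* Defs.v *)
From HB Require Import structures.
From mathcomp Require Import all_boot all_order all_algebra.
From mathcomp Require Import all_classical all_reals all_analysis.
Set Implicit Arguments. Unset Strict Implicit. Unset Printing Implicit Defensive.
Import Order.TTheory GRing.Theory Num.Theory.
Local Open Scope ring_scope.

Section Tetra.
Variable R : realType.
Notation pt := 'rV[R]_3.

Definition c0 : 'I_3 := @Ordinal 3 0 isT.
Definition c1 : 'I_3 := @Ordinal 3 1 isT.
Definition c2 : 'I_3 := @Ordinal 3 2 isT.

Definition dot (u v : pt) : R := \sum_(i < 3) u 0 i * v 0 i.
Definition vnorm (u : pt) : R := Num.sqrt (dot u u).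
Definition cross (u v : pt) : pt :=
  \row_(i < 3)
    (if i == c0 then u 0 c1 * v 0 c2 - u 0 c2 * v 0 c1
     else if i == c1 then u 0 c2 * v 0 c0 - u 0 c0 * v 0 c2
     else u 0 c0 * v 0 c1 - u 0 c1 * v 0 c0).

Definition vec (O P : pt) : pt := P - O.

Definition tetra_nondeg (A B C D : pt) : Prop :=
  dot (cross (vec A C) (vec A D)) (vec A B) != 0.

(* interior dihedral angle at edge AB between faces ABC and ABD, in [0, pi]:
   angle between the components of AC and AD orthogonal to AB *)
Definition perp_comp (A B P : pt) : pt :=
  vec A P - (dot (vec A P) (vec A B) / dot (vec A B) (vec A B)) *: vec A B.
Definition dihedral (A B C D : pt) : R :=
  let u := perp_comp A B C in let w := perp_comp A B D in
  acos (dot u w / (vnorm u * vnorm w)).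

(* planar coordinates of K w.r.t. the directed segment L -> R' *)
Definition xcoord (L R' K : pt) : R :=
  dot (vec L K) (vec L R') / vnorm (vec L R') - vnorm (vec L R') / 2.
Definition ycoord (L R' K : pt) : R :=
  vnorm (cross (vec L K) (vec L R')) / vnorm (vec L R').

Definition v_lab (alpha : R) (L R' K F : pt) : R * R :=
  (sin alpha * (xcoord L R' F - xcoord L R' K),
   sin alpha * ((ycoord L R' F - ycoord L R' K) * (xcoord L R' F + xcoord L R' K))).

(* v_AB(T) for T = ABCD: choose the labelling L = A, R' = B and
   (K, F) = (C, D) or (D, C) so that ((K-L) x (F-L)) . (R'-L) >= 0. *)
Definition v_edge (A B C D : pt) : R * R :=
  let alpha := dihedral A B C D in
  if 0 <= dot (cross (vec A C) (vec A D)) (vec A B)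
  then v_lab alpha A B C D
  else v_lab alpha A B D C.

Definition mirror (P : pt) : pt :=
  \row_(i < 3) (if i == c0 then - P 0 i else P 0 i).

(* orientation-preserving isometry x |-> x Q + t, Q orthogonal with det 1 *)
Definition rotation (Q : 'M[R]_3) : Prop := Q *m Q^T = 1%:M /\ \det Q = 1.

Definition achiral (A B C D : pt) : Prop :=
  exists (Q : 'M[R]_3) (t : pt), rotation Q /\
    let S := [:: A; B; C; D] in
    let M := [seq mirror P | P <- S] in
    (forall P, P \in S -> P *m Q + t \in M) /\
    (forall P', P' \in M -> exists2 P, P \in S & P *m Q + t = P').

End Tetra.

(* Main.v *)
Require Import Defs.
From mathcomp Require Import all_boot all_order all_algebra.
From mathcomp Require Import all_classical all_reals all_analysis.
From mathcomp Require Import ring lra.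
Import Order.TTheory GRing.Theory Num.Theory.
Set Implicit Arguments. Unset Strict Implicit. Unset Printing Implicit Defensive.
Local Open Scope ring_scope.

Section S.
Variable R : realType.

Lemma ord3P (j : 'I_3) : j = c0 \/ j = c1 \/ j = c2.
Proof.
case: j => [[|[|[|k]]] Hk].
- by left; apply/val_inj.
- by right; left; apply/val_inj.
- by right; right; apply/val_inj.
- by [].
Qed.

Lemma sum3 (F : 'I_3 -> R) : \sum_(i < 3) F i = F c0 + F c1 + F c2.
Proof.
rewrite !big_ord_recl big_ord0 addr0 addrA.
by congr (F _ + F _ + F _); apply/val_inj.
Qed.

Lemma det3 (M : 'M[R]_3) : \det M =
  M c0 c0 * (M c1 c1 * M c2 c2 - M c1 c2 * M c2 c1)
  - M c0 c1 * (M c1 c0 * M c2 c2 - M c1 c2 * M c2 c0)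
  + M c0 c2 * (M c1 c0 * M c2 c1 - M c1 c1 * M c2 c0).
Proof.
rewrite (expand_det_row _ ord0) sum3 /cofactor.
rewrite !(expand_det_row _ ord0) /cofactor !big_ord_recl !big_ord0 !det_mx11 !mxE /=.
pose g (a b : nat) := M (inord a) (inord b).
have HM : forall i j, M i j = g i j by move=> i j; rewrite /g !inord_val.
rewrite !HM /= /bump /=.
rewrite !expr0 !expr1 ; ring.
Qed.

Lemma dotE (u v : 'rV[R]_3) : dot u v = u 0 c0 * v 0 c0 + u 0 c1 * v 0 c1 + u 0 c2 * v 0 c2.
Proof. by rewrite /dot sum3. Qed.

Definition sigma (n P0 P : 'rV[R]_3) : 'rV[R]_3 :=
  P - (2 * dot (P - P0) n / dot n n) *: n.

Lemma refl_rot (n P0 : 'rV[R]_3) : dot n n != 0 ->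
  exists (Q : 'M[R]_3) (t : 'rV[R]_3), rotation Q /\
    forall P, P *m Q + t = mirror (sigma n P0 P).
Proof.
move=> nn0.
have nn0' : n 0 c0 * n 0 c0 + n 0 c1 * n 0 c1 + n 0 c2 * n 0 c2 != 0 by rewrite -dotE.
exists (\matrix_(i,j) (((i==j)%:R - 2 * n 0 i * n 0 j / dot n n) * (if j == c0 then -1 else 1))).
exists (\row_j ((2 * dot P0 n / dot n n) * n 0 j * (if j == c0 then -1 else 1))).
split; [split|].
- apply/matrixP => i j; rewrite !mxE sum3 !mxE dotE.
  case: (ord3P i) => [->|[->|->]]; case: (ord3P j) => [->|[->|->]] /=; field; exact: nn0'.
- rewrite det3 !mxE dotE /=; field; exact: nn0'.
- move=> P; apply/rowP => j; rewrite !mxE sum3 !mxE /sigma !dotE !mxE.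
  by case: (ord3P j) => [->|[->|->]] /=; field; exact: nn0'.
Qed.

Lemma dot_ge0 (x : 'rV[R]_3) : 0 <= dot x x.
Proof. rewrite dotE; nra. Qed.

Lemma dot_pos (x y : 'rV[R]_3) : dot x y != 0 -> 0 < dot x x.
Proof.
move=> H; rewrite lt_neqAle dot_ge0 andbT; apply/negP => /eqP H0.
move: H; rewrite !dotE; move: H0; rewrite dotE => H0.
have h0 : x 0 c0 = 0 by apply/eqP; rewrite -sqrf_eq0; apply/eqP; nra.
have h1 : x 0 c1 = 0 by apply/eqP; rewrite -sqrf_eq0; apply/eqP; nra.
have h2 : x 0 c2 = 0 by apply/eqP; rewrite -sqrf_eq0; apply/eqP; nra.
by rewrite h0 h1 h2 !mul0r !addr0 eqxx.
Qed.

Lemma dotC (x y : 'rV[R]_3) : dot x y = dot y x.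
Proof. rewrite !dotE; ring. Qed.

Lemma lagrange (u w : 'rV[R]_3) :
  dot (cross u w) (cross u w) = dot u u * dot w w - dot u w ^+ 2.
Proof. rewrite !dotE /cross !mxE /=; ring. Qed.

Lemma cross_perp (a c d : 'rV[R]_3) (s r : R) :
  dot (cross (c - s *: a) (d - r *: a)) a = dot (cross c d) a.
Proof. rewrite !dotE /cross !mxE /=; ring. Qed.

Lemma sin_dihedral_pos (A B C D : 'rV[R]_3) :
  tetra_nondeg A B C D -> 0 < sin (dihedral A B C D).
Proof.
rewrite /tetra_nondeg /dihedral => H.
set u := perp_comp A B C; set w := perp_comp A B D.
have Hx : dot (cross u w) (vec A B) != 0 by rewrite /u /w /perp_comp cross_perp.
have Hp := dot_pos Hx; rewrite lagrange in Hp.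
have uu0 := dot_ge0 u; have ww0 := dot_ge0 w.
have uuw : 0 < dot u u * dot w w by nra.
have uu : 0 < dot u u by nra.
have ww : 0 < dot w w by nra.
set k := dot u w / (vnorm u * vnorm w).
have nuw : vnorm u * vnorm w = Num.sqrt (dot u u * dot w w) by rewrite /vnorm sqrtrM.
have Hk : k ^+ 2 < 1.
  rewrite /k nuw expr_div_n sqr_sqrtr; last by apply: ltW.
  by rewrite ltr_pdivrMr // mul1r; lra.
have Hk' : -1 <= k <= 1 by apply/andP; split; nra.
by rewrite sin_acos // sqrtr_gt0 subr_gt0.
Qed.

Lemma achiral_refl (A B C D n P0 : 'rV[R]_3) : dot n n != 0 ->
  let S := [:: A; B; C; D] in
  all (fun P => sigma n P0 P \in S) S ->
  all (fun X => X \in map (sigma n P0) S) S ->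
  achiral A B C D.
Proof.
move=> nn0 S H1 H2.
have [Q [t [HQ Ht]]] := refl_rot P0 nn0.
exists Q, t; split => //=.
have -> : [:: mirror A; mirror B; mirror C; mirror D] = map (@mirror R) S by [].
split.
- move=> P PS; rewrite Ht. apply: map_f.
  by move/allP: H1 => /(_ P PS).
- move=> P' /mapP [X XS ->].
  move/allP: H2 => /(_ X XS) /mapP [Y YS ->].
  by exists Y => //; rewrite Ht.
Qed.

Lemma vlab0 (al : R) (L R' K F : 'rV[R]_3) : sin al != 0 ->
  v_lab al L R' K F = (0, 0) ->
  xcoord L R' F = xcoord L R' K /\
  (ycoord L R' F = ycoord L R' K \/ xcoord L R' F + xcoord L R' K = 0).
Proof.
move=> s0 [] /eqP; rewrite mulf_eq0 (negbTE s0) /= subr_eq0 => /eqP h1 /eqP.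
rewrite mulf_eq0 (negbTE s0) /= mulf_eq0 subr_eq0 => /orP [] /eqP h2; split => //.
- by left.
- by right.
Qed.

Lemma sigma_eq (n P0 P : 'rV[R]_3) (k : R) : dot n n != 0 ->
  dot (P - P0) n = k * dot n n / 2 -> sigma n P0 P = P - k *: n.
Proof. by move=> nn0 H; rewrite /sigma H; congr (_ - _ *: _); field. Qed.

Lemma inS4 (A B C D X : 'rV[R]_3) :
  X = A \/ X = B \/ X = C \/ X = D -> X \in [:: A; B; C; D].
Proof. by case=> [->|[->|[->|->]]]; rewrite !inE eqxx ?orbT. Qed.

Theorem lemma1' (A B C D : 'rV[R]_3) :
  tetra_nondeg A B C D -> v_edge A B C D = (0, 0) -> achiral A B C D.
Proof.
move=> Hnd Hv.
have s0 : sin (dihedral A B C D) != 0 by rewrite gt_eqF // sin_dihedral_pos.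
have [hx hy] : xcoord A B D = xcoord A B C /\
   (ycoord A B D = ycoord A B C \/ xcoord A B D + xcoord A B C = 0).
  move: Hv; rewrite /v_edge; case: ifP => _ /(vlab0 s0) [h1 h2]; first by split.
  split; first by rewrite h1.
  by case: h2 => h2; [left | right; rewrite addrC].
have Hnd' := Hnd; rewrite /tetra_nondeg in Hnd'.
have aa0 : 0 < dot (vec A B) (vec A B).
  by apply: (@dot_pos _ (cross (vec A C) (vec A D))); rewrite dotC.
have na0 : 0 < vnorm (vec A B) by rewrite /vnorm sqrtr_gt0.
have nan0 : vnorm (vec A B) != 0 by rewrite gt_eqF.
have naa : vnorm (vec A B) ^+ 2 = dot (vec A B) (vec A B) by rewrite sqr_sqrtr // ltW.
have hda : dot (vec A D) (vec A B) = dot (vec A C) (vec A B).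
  move: hx; rewrite /xcoord => /(congr1 (fun z => (z + vnorm (vec A B) / 2) * vnorm (vec A B))).
  by rewrite !subrK !divfK.
case: hy => hy.
- (* symmetric case: reflection swapping C and D *)
  have hcr : dot (cross (vec A D) (vec A B)) (cross (vec A D) (vec A B)) =
             dot (cross (vec A C) (vec A B)) (cross (vec A C) (vec A B)).
    move: hy; rewrite /ycoord => /(congr1 (fun z => z * vnorm (vec A B))).
    by rewrite !divfK // => /eqP; rewrite eqr_sqrt ?dot_ge0 // => /eqP.
  move: hcr; rewrite !lagrange hda => /(congr1 (fun z => z + dot (vec A C) (vec A B) ^+ 2)).
  rewrite !subrK => hcr.
  have hcd : dot (vec A D) (vec A D) = dot (vec A C) (vec A C).
    by apply: (mulIf (lt0r_neq0 aa0)).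
  set n := C - D; set P0 := (1/2 : R) *: (C + D).
  have Hn : dot n (cross (vec A D) (vec A B)) = dot (cross (vec A C) (vec A D)) (vec A B).
    by rewrite /n !dotE /cross /vec !mxE /=; ring.
  have nn0 : dot n n != 0 by rewrite gt_eqF // (@dot_pos _ (cross (vec A D) (vec A B))) // Hn.
  have sA : sigma n P0 A = A - 0 *: n.
    apply: sigma_eq => //.
    have -> : dot (A - P0) n = (dot (vec A D) (vec A D) - dot (vec A C) (vec A C)) / 2.
      by rewrite /n /P0 /vec !dotE !mxE; field.
    by rewrite hcd; ring.
  have sB : sigma n P0 B = B - 0 *: n.
    apply: sigma_eq => //.
    have -> : dot (B - P0) n = dot (vec A C) (vec A B) - dot (vec A D) (vec A B) +
       (dot (vec A D) (vec A D) - dot (vec A C) (vec A C)) / 2.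
      by rewrite /n /P0 /vec !dotE !mxE; field.
    by rewrite hcd hda; ring.
  have sC : sigma n P0 C = C - 1 *: n.
    by apply: sigma_eq => //; rewrite /n /P0 !dotE !mxE; field.
  have sD : sigma n P0 D = D - (-1) *: n.
    by apply: sigma_eq => //; rewrite /n /P0 !dotE !mxE; field.
  have eA : A - 0 *: n = A by rewrite scale0r subr0.
  have eB : B - 0 *: n = B by rewrite scale0r subr0.
  have eC : C - 1 *: n = D by rewrite scale1r /n opprB addrC subrK.
  have eD : D - (-1) *: n = C by rewrite scaleN1r opprK /n addrC subrK.
  apply: (@achiral_refl _ _ _ _ n P0 nn0) => /=;
    rewrite sA sB sC sD eA eB eC eD !inS4 //; tauto.
- (* C, D on the perpendicular bisector plane of AB *)
  have hx0 : xcoord A B C = 0.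
    by move: hy; rewrite hx => /eqP; rewrite -mulr2n mulrn_eq0 /= => /eqP.
  have hca : dot (vec A C) (vec A B) = dot (vec A B) (vec A B) / 2.
    move: hx0; rewrite /xcoord => /(congr1 (fun z => (z + vnorm (vec A B) / 2) * vnorm (vec A B))).
    by rewrite subrK divfK // add0r -naa => ->; rewrite expr2; field.
  set n := vec A B; set P0 := (1/2 : R) *: (A + B).
  have nn0 : dot n n != 0 by rewrite gt_eqF.
  have sA : sigma n P0 A = A - (-1) *: n.
    by apply: sigma_eq => //; rewrite /n /P0 /vec !dotE !mxE; field.
  have sB : sigma n P0 B = B - 1 *: n.
    by apply: sigma_eq => //; rewrite /n /P0 /vec !dotE !mxE; field.
  have sC : sigma n P0 C = C - 0 *: n.
    apply: sigma_eq => //.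
    have -> : dot (C - P0) n = dot (vec A C) (vec A B) - dot n n / 2.
      by rewrite /n /P0 /vec !dotE !mxE; field.
    by rewrite hca /n; ring.
  have sD : sigma n P0 D = D - 0 *: n.
    apply: sigma_eq => //.
    have -> : dot (D - P0) n = dot (vec A D) (vec A B) - dot n n / 2.
      by rewrite /n /P0 /vec !dotE !mxE; field.
    by rewrite hda hca /n; ring.
  have eA : A - (-1) *: n = B by rewrite scaleN1r opprK /n /vec addrC subrK.
  have eB : B - 1 *: n = A by rewrite scale1r /n /vec opprB addrC subrK.
  have eC : C - 0 *: n = C by rewrite scale0r subr0.
  have eD : D - 0 *: n = D by rewrite scale0r subr0.
  apply: (@achiral_refl _ _ _ _ n P0 nn0) => /=;
    rewrite sA sB sC sD eA eB eC eD !inS4 //; tauto.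
Qed.
End S.

Theorem lemma1 (R : realType) (A B C D : 'rV[R]_3) :
  tetra_nondeg A B C D -> v_edge A B C D = (0, 0) -> achiral A B C D.
Proof. exact: lemma1'. Qed.
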